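(* There exists a copula $C\in\mathcal{C}^3_{\rm c}$ with $d_\infty(C,\psi(C))\ge\frac{3}{16}$; in particular $\sup_{C\in\mathcal{C}^3_{\rm c}}d_\infty(C,\psi(C))\ge\frac{3}{16}$.
   Context: $\mathbb{I}=[0,1]$, $\lambda$ Lebesgue measure; $d_\infty(C_1,C_2)=\max_{\mathbf{x}\in\mathbb{I}^3}|C_1(\mathbf{x})-C_2(\mathbf{x})|$. Points of $\mathbb{I}^3$ are written $(\mathbf{u},v)$, $\mathbf{u}=(u_1,u_2)$. For a three-dimensional copula $C$, $K_C$ is (a version of) the regular conditional distribution of $(U_1,U_2)$ given $U_3=v$, $(U_1,U_2,U_3)\sim C$; $F_{1|3}(u_1|t)=K_C(t,[0,u_1]\times\mathbb{I})$, $F_{2|3}(u_2|t)=K_C(t,\mathbb{I}\times[0,u_2])$. $\mathcal{C}^3_{\rm c}$ is the set of three-dimensional copulas for which $F_{1|3}(\cdot|t)$ and $F_{2|3}(\cdot|t)$ are continuous for $\lambda$-a.e. $t$; for such $C$, for a.e. $t$ the conditional copula $C^t_{12;3}$ is the unique bivariate copula with $K_C(t,[\mathbf{0},\mathbf{u}])=C^t_{12;3}(F_{1|3}(u_1|t),F_{2|3}(u_2|t))$. The partial copula is $C_p(\mathbf{s})=\int_{\mathbb{I}}C^t_{12;3}(\mathbf{s})\,d\lambda(t)$ and the partial vine copula $\psi(C)$ is defined by $\psi(C)(\mathbf{u},v)=\int_{[0,v]}C_p(F_{1|3}(u_1|t),F_{2|3}(u_2|t))\,d\lambda(t)$. *)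

(* Defs.v *)
From mathcomp Require Import all_boot all_order all_algebra.
From mathcomp Require Import all_classical all_reals all_analysis.
From mathcomp Require Import measurable_realfun.
Set Implicit Arguments.
Unset Strict Implicit.
Unset Printing Implicit Defensive.
Import Order.TTheory GRing.Theory Num.Theory.
Import numFieldNormedType.Exports.
Local Open Scope classical_set_scope.
Local Open Scope ring_scope.

Section Copulas.
Variable R : realType.

Definition inI (x : R) : bool := (0 <= x <= 1).

(* bivariate copula (only its values on I^2 matter) *)
Definition copula2 (C : R -> R -> R) : Prop :=
  (forall u, inI u -> [/\ C 0 u = 0, C u 0 = 0, C u 1 = u & C 1 u = u]) /\
  (forall a1 b1 a2 b2, inI a1 -> inI b1 -> inI a2 -> inI b2 ->
     a1 <= b1 -> a2 <= b2 ->
     0 <= C b1 b2 - C a1 b2 - C b1 a2 + C a1 a2).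

(* three-dimensional copula (only its values on I^3 matter):
   grounded, uniform margins, 3-increasing *)
Definition copula3 (C : R -> R -> R -> R) : Prop :=
  [/\ (forall x y, inI x -> inI y ->
         [/\ C 0 x y = 0, C x 0 y = 0 & C x y 0 = 0]),
      (forall x, inI x -> [/\ C x 1 1 = x, C 1 x 1 = x & C 1 1 x = x]) &
      (forall a1 b1 a2 b2 a3 b3,
         inI a1 -> inI b1 -> inI a2 -> inI b2 -> inI a3 -> inI b3 ->
         a1 <= b1 -> a2 <= b2 -> a3 <= b3 ->
         0 <= C b1 b2 b3 - C a1 b2 b3 - C b1 a2 b3 - C b1 b2 a3
              + C a1 a2 b3 + C a1 b2 a3 + C b1 a2 a3 - C a1 a2 a3)].

(* K is a version of the regular conditional distribution K_C of (U1,U2)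
   given U3 = t, where (U1,U2,U3) ~ C: a Markov kernel from R to R^2 with
   C(u,v) = int_[0,v] K(t,[0,u]) dlambda(t) for all (u,v) in I^3
   (this identity characterises the disintegration of the measure of C
   along its (uniform) third margin). *)
Definition cond_kernel (C : R -> R -> R -> R)
    (K : R -> probability (R * R)%type R) : Prop :=
  (forall A : set (R * R), measurable A ->
     measurable_fun [set: R] (K ^~ A)) /\
  (forall u1 u2 v, inI u1 -> inI u2 -> inI v ->
     (C u1 u2 v)%:E =
     (\int[@lebesgue_measure R]_(t in `[0%R, v])
        K t (`[0%R, u1] `*` `[0%R, u2]))%E).

Definition F13 (K : R -> probability (R * R)%type R) (t u1 : R) : R :=
  fine (K t (`[0%R, u1] `*` `[0%R, 1%R])).
Definition F23 (K : R -> probability (R * R)%type R) (t u2 : R) : R :=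
  fine (K t (`[0%R, 1%R] `*` `[0%R, u2])).

(* the defining property of C^3_c, for the version K:
   for lambda-a.e. t in I, F_{1|3}(.|t) and F_{2|3}(.|t) are continuous *)
Definition cont_cond_dfs (K : R -> probability (R * R)%type R) : Prop :=
  {ae @lebesgue_measure R, forall t, inI t ->
     {within `[0%R, 1%R], continuous (F13 K t)} /\
     {within `[0%R, 1%R], continuous (F23 K t)}}.

Definition in_Cc (C : R -> R -> R -> R) : Prop :=
  copula3 C /\ exists K, cond_kernel C K /\ cont_cond_dfs K.

(* Ct t is (a version of) the conditional copula C^t_{12;3}: for a.e. t it is
   a bivariate copula with K(t,[0,u]) = C^t(F_{1|3}(u1|t), F_{2|3}(u2|t));
   we also ask t |-> C^t(s) to be measurable. *)
Definition cond_copulas (K : R -> probability (R * R)%type R)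
    (Ct : R -> R -> R -> R) : Prop :=
  (forall s1 s2 : R, measurable_fun (`[0%R, 1%R] : set R) (fun t : R => Ct t s1 s2)) /\
  {ae @lebesgue_measure R, forall t, inI t ->
     copula2 (Ct t) /\
     (forall u1 u2, inI u1 -> inI u2 ->
        K t (`[0%R, u1] `*` `[0%R, u2]) =
        (Ct t (F13 K t u1) (F23 K t u2))%:E)}.

Definition partial_copula (Ct : R -> R -> R -> R) (s1 s2 : R) : R :=
  fine (\int[@lebesgue_measure R]_(t in `[0%R, 1%R]) (Ct t s1 s2)%:E)%E.

Definition pvc (K : R -> probability (R * R)%type R)
    (Ct : R -> R -> R -> R) (u1 u2 v : R) : R :=
  fine (\int[@lebesgue_measure R]_(t in `[0%R, v])
          (partial_copula Ct (F13 K t u1) (F23 K t u2))%:E)%E.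

(* d_infty(C1,C2) = max over I^3 of |C1 - C2| (written as a sup) *)
Definition dinf (C1 C2 : R -> R -> R -> R) : R :=
  sup [set r | exists u1 u2 v, [/\ inI u1, inI u2, inI v &
                 r = `|C1 u1 u2 v - C2 u1 u2 v|]].

End Copulas.

(* Main.v *)
Require Import Defs.
From HB Require Import structures.
From mathcomp Require Import all_boot all_order all_algebra.
From mathcomp Require Import all_classical all_reals all_analysis.
From mathcomp Require Import measurable_realfun.
From mathcomp Require Import ring lra.
Import Order.TTheory GRing.Theory Num.Theory.
Import numFieldNormedType.Exports.
Local Open Scope ring_scope.

Module Dev.
Local Open Scope classical_set_scope.
Local Open Scope ring_scope.
Set Implicit Arguments.
Unset Strict Implicit.

Ltac noif t := lazymatch t with context [if _ then _ else _] => fail | _ => idtac end.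
Ltac crush := match goal with
 | |- context [if ?x <= ?y then _ else _] => noif x; noif y; case: (leP x y) => ?; [try (exfalso; lra); crush | try (exfalso; lra); crush]
 | |- context [if ?x < ?y then _ else _] => noif x; noif y; case: (ltP x y) => ?; [try (exfalso; lra); crush | try (exfalso; lra); crush]
 | _ => lra end.



Section Alg.
Variable R : realType.


Definition phi (z : R) : R := if z <= 0 then 0 else if z <= 1/4 then z else 1/4.
Definition tm (b c s1 s2 : R) := phi (Num.min s1 (s2 + c) - b).
Definition sh (q0 q1 q2 q3 s1 s2 : R) :=
  tm 0 (0 - q0) s1 s2 + tm (1/4) (1/4 - q1) s1 s2 +
  tm (1/2) (1/2 - q2) s1 s2 + tm (3/4) (3/4 - q3) s1 s2.

Lemma phi_mono (z w : R) : z <= w -> phi z <= phi w.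
Proof. move=> ?; rewrite /phi; crush. Qed.
Lemma phi_ge0 (z : R) : 0 <= phi z.
Proof. rewrite /phi; crush. Qed.
Lemma phi_le (z : R) : phi z <= 1/4.
Proof. rewrite /phi; crush. Qed.
Lemma phi0 (z : R) : z <= 0 -> phi z = 0.
Proof. move=> ?; rewrite /phi; crush. Qed.

Lemma sum_phi (u : R) : 0 <= u <= 1 ->
  phi u + phi (u - 1/4) + phi (u - 1/2) + phi (u - 3/4) = u.
Proof. move=> /andP[? ?]; rewrite /phi; crush. Qed.

Lemma tm_incr (b c a1 b1 a2 b2 : R) : a1 <= b1 -> a2 <= b2 ->
  0 <= tm b c b1 b2 - tm b c a1 b2 - tm b c b1 a2 + tm b c a1 a2.
Proof.
move=> h1 h2; rewrite /tm.
have mono : forall x y, x <= y -> phi (x - b) <= phi (y - b).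
  by move=> x y xy; apply: phi_mono; lra.
case: (leP a1 (a2 + c)) => h.
  have e2 : Num.min a1 (b2 + c) = a1 by apply/min_idPl; lra.
  rewrite e2.
  have : phi (Num.min b1 (a2 + c) - b) <= phi (Num.min b1 (b2 + c) - b).
    apply: mono; rewrite le_min !ge_min; apply/andP; split.
      by rewrite lexx.
    by apply/orP; right; lra.
  lra.
have e2 : Num.min b1 (a2 + c) = a2 + c by apply/min_idPr; lra.
rewrite e2.
have : phi (Num.min a1 (b2 + c) - b) <= phi (Num.min b1 (b2 + c) - b).
  apply: mono; rewrite le_min !ge_min; apply/andP; split.
    by apply/orP; left.
  by apply/orP; right; rewrite lexx.
lra.
Qed.

Lemma tm_0l (b c u : R) : 0 <= b -> tm b c 0 u = 0.
Proof. move=> hb; rewrite /tm /phi /Order.min; crush. Qed.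

Lemma tm_0r (b q u : R) : 0 <= q -> tm b (b - q) u 0 = 0.
Proof. move=> hq; rewrite /tm /phi /Order.min; crush. Qed.

Lemma tm_1r (b q u : R) : q <= 3/4 -> tm b (b - q) u 1 = phi (u - b).
Proof. move=> hq; rewrite /tm /phi /Order.min; crush. Qed.

Lemma tm_1l (b q u : R) : b <= 3/4 -> tm b (b - q) 1 u = phi (u - q).
Proof. move=> hq; rewrite /tm /phi /Order.min; crush. Qed.

Definition cop2 (C : R -> R -> R) : Prop :=
  (forall u, 0 <= u <= 1 -> [/\ C 0 u = 0, C u 0 = 0, C u 1 = u & C 1 u = u]) /\
  (forall a1 b1 a2 b2, 0 <= a1 <= 1 -> 0 <= b1 <= 1 -> 0 <= a2 <= 1 -> 0 <= b2 <= 1 ->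
     a1 <= b1 -> a2 <= b2 ->
     0 <= C b1 b2 - C a1 b2 - C b1 a2 + C a1 a2).

Lemma sh_incr (q0 q1 q2 q3 a1 b1 a2 b2 : R) : a1 <= b1 -> a2 <= b2 ->
  0 <= sh q0 q1 q2 q3 b1 b2 - sh q0 q1 q2 q3 a1 b2 - sh q0 q1 q2 q3 b1 a2 + sh q0 q1 q2 q3 a1 a2.
Proof.
move=> h1 h2; rewrite /sh.
have := tm_incr 0 (0 - q0) h1 h2.
have := tm_incr (1/4) (1/4 - q1) h1 h2.
have := tm_incr (1/2) (1/2 - q2) h1 h2.
have := tm_incr (3/4) (3/4 - q3) h1 h2.
lra.
Qed.

Lemma sh_ge0 (q0 q1 q2 q3 s1 s2 : R) : 0 <= sh q0 q1 q2 q3 s1 s2.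
Proof. by rewrite /sh /tm; repeat apply: addr_ge0; exact: phi_ge0. Qed.
End Alg.



Section B.
Variable R : realType.

Lemma sh_copula (q0 q1 q2 q3 : R) :
  0 <= q0 <= 3/4 -> 0 <= q1 <= 3/4 -> 0 <= q2 <= 3/4 -> 0 <= q3 <= 3/4 ->
  (forall u : R, 0 <= u <= 1 -> phi (u - q0) + phi (u - q1) + phi (u - q2) + phi (u - q3) = u) ->
  cop2 (sh q0 q1 q2 q3).
Proof.
move=> /andP[? ?] /andP[? ?] /andP[? ?] /andP[? ?] hs; split.
  move=> u hu; split.
  - rewrite /sh !tm_0l //; lra.
  - by rewrite /sh !tm_0r // !addr0.
  - rewrite /sh !tm_1r //; try lra.
    by rewrite subr0 sum_phi.
  - by rewrite /sh !tm_1l //; try lra; rewrite hs.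
by move=> a1 b1 a2 b2 _ _ _ _; exact: sh_incr.
Qed.

Definition sh1 := sh (1/4 : R) (3/4) (1/2) 0.
Definition sh2 := sh (1/2 : R) (1/4) (3/4) 0.
Definition sh3 := sh (3/4 : R) 0 (1/2) (1/4).
Definition sh4 := sh (3/4 : R) (1/4) 0 (1/2).

Lemma sh1_cop : cop2 sh1.
Proof.
apply: sh_copula; try lra.
by move=> u hu; have := sum_phi hu; rewrite subr0; lra.
Qed.
Lemma sh2_cop : cop2 sh2.
Proof.
apply: sh_copula; try lra.
by move=> u hu; have := sum_phi hu; rewrite subr0; lra.
Qed.
Lemma sh3_cop : cop2 sh3.
Proof.
apply: sh_copula; try lra.
by move=> u hu; have := sum_phi hu; rewrite subr0; lra.
Qed.
Lemma sh4_cop : cop2 sh4.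
Proof.
apply: sh_copula; try lra.
by move=> u hu; have := sum_phi hu; rewrite subr0; lra.
Qed.

Ltac ev := rewrite /sh1 /sh2 /sh3 /sh4 /sh /tm /phi /Order.min; crush.
Lemma e11 : sh1 (1/4) (1/2) = 1/4. Proof. ev. Qed.
Lemma e12 : sh2 (1/4) (1/2) = 0. Proof. ev. Qed.
Lemma e13 : sh3 (1/4) (1/2) = 0. Proof. ev. Qed.
Lemma e14 : sh4 (1/4) (1/2) = 0. Proof. ev. Qed.
Lemma e21 : sh1 (1/2) (3/4) = 1/4. Proof. ev. Qed.
Lemma e22 : sh2 (1/2) (3/4) = 1/2. Proof. ev. Qed.
Lemma e23 : sh3 (1/2) (3/4) = 1/4. Proof. ev. Qed.
Lemma e24 : sh4 (1/2) (3/4) = 1/4. Proof. ev. Qed.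
Lemma e31 : sh1 (1/2) (1/4) = 0. Proof. ev. Qed.
Lemma e32 : sh2 (1/2) (1/4) = 0. Proof. ev. Qed.
Lemma e33 : sh3 (1/2) (1/4) = 1/4. Proof. ev. Qed.
Lemma e34 : sh4 (1/2) (1/4) = 0. Proof. ev. Qed.
Lemma e41 : sh1 (3/4) (1/2) = 1/4. Proof. ev. Qed.
Lemma e42 : sh2 (3/4) (1/2) = 1/4. Proof. ev. Qed.
Lemma e43 : sh3 (3/4) (1/2) = 1/4. Proof. ev. Qed.
Lemma e44 : sh4 (3/4) (1/2) = 1/2. Proof. ev. Qed.

Definition Fcv (u : R) := Num.max (u / 2) (3 * u / 2 - 1 / 2).
Definition Fcc (u : R) := Num.min (3 * u / 2) (u / 2 + 1 / 2).
Definition Qcv (x : R) := Num.min (2 * x) (1 / 3 + 2 * x / 3).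
Definition Qcc (x : R) := Num.max (2 * x / 3) (2 * x - 1).

Ltac uf := rewrite /Fcv /Fcc /Qcv /Qcc /Order.max /Order.min.
Lemma Fcv_I (u : R) : 0 <= u <= 1 -> 0 <= Fcv u <= 1.
Proof. move=> /andP[? ?]; uf; crush. Qed.
Lemma Fcc_I (u : R) : 0 <= u <= 1 -> 0 <= Fcc u <= 1.
Proof. move=> /andP[? ?]; uf; crush. Qed.
Lemma Fcv_mono (u w : R) : u <= w -> Fcv u <= Fcv w.
Proof. move=> ?; uf; crush. Qed.
Lemma Fcc_mono (u w : R) : u <= w -> Fcc u <= Fcc w.
Proof. move=> ?; uf; crush. Qed.
Lemma Fcv0 : Fcv 0 = 0. Proof. uf; crush. Qed.
Lemma Fcc0 : Fcc 0 = 0. Proof. uf; crush. Qed.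
Lemma Fcv1 : Fcv 1 = 1. Proof. uf; crush. Qed.
Lemma Fcc1 : Fcc 1 = 1. Proof. uf; crush. Qed.
Lemma Fcvh : Fcv (1/2) = 1/4. Proof. uf; crush. Qed.
Lemma Fcch : Fcc (1/2) = 3/4. Proof. uf; crush. Qed.
Lemma Fsum (u : R) : Fcv u + Fcc u = 2 * u.
Proof. uf; crush. Qed.
Lemma QFcv (x u : R) : 0 <= x <= 1 -> 0 <= u <= 1 ->
  (0 <= Qcv x /\ Qcv x <= u) <-> x <= Fcv u.
Proof. move=> /andP[? ?] /andP[? ?]; uf; crush. Qed.
Lemma QFcc (x u : R) : 0 <= x <= 1 -> 0 <= u <= 1 ->
  (0 <= Qcc x /\ Qcc x <= u) <-> x <= Fcc u.
Proof. move=> /andP[? ?] /andP[? ?]; uf; crush. Qed.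

Lemma lin_cont (a b : R) : continuous (fun u : R => a * u + b).
Proof. move=> x. apply: cvgD; last exact: cvg_cst. apply: cvgMr. exact: cvg_id. Qed.

Lemma Fcv_cont : continuous Fcv.
Proof.
move=> x; rewrite /Fcv.
have -> : (fun u : R => Num.max (u / 2) (3 * u / 2 - 1 / 2)) =
   (fun u => (2^-1) * u + 0) \max (fun u => (3/2) * u + (- (1/2))).
  by apply: funext => u /=; congr Num.max; rewrite /=; [rewrite addr0 mulrC | rewrite mulrAC].
apply: continuous_max; exact: lin_cont.
Qed.
Lemma Fcc_cont : continuous Fcc.
Proof.
move=> x; rewrite /Fcc.
have -> : (fun u : R => Num.min (3 * u / 2) (u / 2 + 1 / 2)) =
   (fun u => (3/2) * u + 0) \min (fun u => (2^-1) * u + 1/2).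
  by apply: funext => u /=; congr Num.min; rewrite /=; [rewrite addr0 mulrAC | rewrite mulrC].
apply: continuous_min; exact: lin_cont.
Qed.
Lemma Qcv_cont : continuous Qcv.
Proof.
move=> x; rewrite /Qcv.
have -> : (fun u : R => Num.min (2 * u) (1 / 3 + 2 * u / 3)) =
   (fun u => 2 * u + 0) \min (fun u => (2/3) * u + 1/3).
  by apply: funext => u /=; congr Num.min; rewrite /=; [rewrite addr0 | rewrite addrC mulrAC].
apply: continuous_min; exact: lin_cont.
Qed.
Lemma Qcc_cont : continuous Qcc.
Proof.
move=> x; rewrite /Qcc.
have -> : (fun u : R => Num.max (2 * u / 3) (2 * u - 1)) =
   (fun u => (2/3) * u + 0) \max (fun u => 2 * u + (-1)).
  by apply: funext => u /=; rewrite addr0 mulrAC.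
apply: continuous_max; exact: lin_cont.
Qed.
End B.



Section C.
Variable R : realType.
Local Notation mu := (@lebesgue_measure R).
Lemma meas_co (a b m : R) : a <= b ->
  mu ((`[a, b[ `&` `]-oo, m]) : set R) = (if m < a then 0 else if m < b then m - a else b - a)%:E.
Proof.
move=> ab; case: (ltP m a) => hma.
  rewrite (_ : _ `&` _ = set0) ?measure0 //.
  apply/seteqP; split => x //=; rewrite !in_itv /=; move=> [/andP[h1 h2] h3]; lra.
case: (ltP m b) => hmb.
  rewrite (_ : _ `&` _ = `[a, m]%classic).
    rewrite lebesgue_measure_itv /= lte_fin.
    case: (ltP a m) => h; first by rewrite EFinB.
    by congr (_%:E); lra.
  apply/seteqP; split => x /=; rewrite !in_itv /=.
    by move=> [/andP[h1 h2] h3]; apply/andP; split.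
  move=> /andP[h1 h2]; split; [apply/andP; split => // |]; lra.
rewrite (_ : _ `&` _ = `[a, b[%classic).
  rewrite lebesgue_measure_itv /= lte_fin.
  case: (ltP a b) => h; first by rewrite EFinB.
  by congr (_%:E); lra.
apply/seteqP; split => x /=; rewrite !in_itv /=.
  by move=> [/andP[h1 h2] h3]; apply/andP; split.
move=> /andP[h1 h2]; split; [apply/andP; split => // |]; lra.
Qed.

Lemma meas_cc (a b m : R) : a <= b ->
  mu ((`[a, b] `&` `]-oo, m]) : set R) = (if m < a then 0 else if m < b then m - a else b - a)%:E.
Proof.
move=> ab; case: (ltP m a) => hma.
  rewrite (_ : _ `&` _ = set0) ?measure0 //.
  apply/seteqP; split => x //=; rewrite !in_itv /=; move=> [/andP[h1 h2] h3]; lra.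
case: (ltP m b) => hmb.
  rewrite (_ : _ `&` _ = `[a, m]%classic).
    rewrite lebesgue_measure_itv /= lte_fin.
    case: (ltP a m) => h; first by rewrite EFinB.
    by congr (_%:E); lra.
  apply/seteqP; split => x /=; rewrite !in_itv /=.
    by move=> [/andP[h1 h2] h3]; apply/andP; split.
  move=> /andP[h1 h2]; split; [apply/andP; split => // |]; lra.
rewrite (_ : _ `&` _ = `[a, b]%classic).
  rewrite lebesgue_measure_itv /= lte_fin.
  case: (ltP a b) => h; first by rewrite EFinB.
  by congr (_%:E); lra.
apply/seteqP; split => x /=; rewrite !in_itv /=.
  by move=> [/andP[h1 h2] h3]; apply/andP; split.
move=> /andP[h1 h2]; split; [apply/andP; split => // |]; lra.
Qed.

Lemma if_phi (m a b : R) : b - a = 1/4 ->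
  (if m < a then 0 else if m < b then m - a else b - a) = phi (m - a).
Proof. move=> hb; rewrite /phi; crush. Qed.

Definition P1 := (uniform_prob (@ltr01 R) : probability _ R).

Lemma P1E (S : set R) : measurable S -> P1 S = mu (S `&` `[0, 1]).
Proof.
move=> mS; rewrite /P1 /= /uniform_prob integral_uniform_pdf.
rewrite (eq_integral (fun=> 1%:E)); last first.
  move=> x; rewrite inE /= => -[_]; rewrite in_itv /= /uniform_pdf => ->.
  by rewrite subr0 invr1.
rewrite integral_cst /=; first by rewrite mul1e.
exact: measurableI.
Qed.

Definition hs (q0 q1 q2 q3 x : R) :=
  if x < 1/4 then x + q0 else if x < 1/2 then x - 1/4 + q1
  else if x < 3/4 then x - 1/2 + q2 else x - 3/4 + q3.

Lemma lin_meas (a b : R) : measurable_fun setT (fun x : R => x + a + b).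
Proof. by apply: measurable_funD => //; apply: measurable_funD. Qed.

Lemma hs_meas (q0 q1 q2 q3 : R) : measurable_fun setT (hs q0 q1 q2 q3).
Proof.
rewrite /hs.
have mlt : forall c : R, measurable_fun setT (fun x : R => x < c).
  by move=> c; apply: measurable_fun_ltr.
apply: measurable_fun_ifT => //; first by apply: measurable_funD.
apply: measurable_fun_ifT => //; first exact: lin_meas.
apply: measurable_fun_ifT => //; exact: lin_meas.
Qed.

Lemma hs_I (q0 q1 q2 q3 x : R) :
  0 <= q0 <= 3/4 -> 0 <= q1 <= 3/4 -> 0 <= q2 <= 3/4 -> 0 <= q3 <= 3/4 ->
  0 <= x <= 1 -> 0 <= hs q0 q1 q2 q3 x <= 1.
Proof.
move=> /andP[? ?] /andP[? ?] /andP[? ?] /andP[? ?] /andP[? ?]; rewrite /hs; crush.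
Qed.

End C.



Section C2.
Variable R : realType.
Local Notation mu := (@lebesgue_measure R).

Lemma rectE (Q1 Q2 F1 F2 : R -> R) (q0 q1 q2 q3 : R) :
  measurable_fun setT (fun x => (Q1 x, Q2 (hs q0 q1 q2 q3 x))) ->
  (forall x u, 0 <= x <= 1 -> 0 <= u <= 1 -> (0 <= Q1 x <= u) = (x <= F1 u)) ->
  (forall x u, 0 <= x <= 1 -> 0 <= u <= 1 -> (0 <= Q2 x <= u) = (x <= F2 u)) ->
  0 <= q0 <= 3/4 -> 0 <= q1 <= 3/4 -> 0 <= q2 <= 3/4 -> 0 <= q3 <= 3/4 ->
  forall u1 u2, 0 <= u1 <= 1 -> 0 <= u2 <= 1 ->
  P1 R ((fun x => (Q1 x, Q2 (hs q0 q1 q2 q3 x))) @^-1` (`[0, u1] `*` `[0, u2]))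
  = (sh q0 q1 q2 q3 (F1 u1) (F2 u2))%:E.
Proof.
move=> mf QF1 QF2 hq0 hq1 hq2 hq3 u1 u2 hu1 hu2.
set f := fun x => _.
have mS : measurable (f @^-1` (`[0, u1] `*` `[0, u2])).
  have := mf measurableT _ (measurableX (measurable_itv `[0, u1]) (measurable_itv `[0, u2])).
  by rewrite setTI.
rewrite P1E //.
set m0 := Num.min (F1 u1) (F2 u2 + (0 - q0)).
set m1 := Num.min (F1 u1) (F2 u2 + (1/4 - q1)).
set m2 := Num.min (F1 u1) (F2 u2 + (1/2 - q2)).
set m3 := Num.min (F1 u1) (F2 u2 + (3/4 - q3)).
move: (hq0) (hq1) (hq2) (hq3) => /andP[? ?] /andP[? ?] /andP[? ?] /andP[? ?].
have -> : f @^-1` (`[0, u1] `*` `[0, u2]) `&` `[0, 1] =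
  (`[0, 1/4[ `&` `]-oo, m0]) `|` ((`[1/4, 1/2[ `&` `]-oo, m1]) `|`
  ((`[1/2, 3/4[ `&` `]-oo, m2]) `|` (`[3/4, 1] `&` `]-oo, m3]))).
  apply/seteqP; split => x /=; rewrite !in_itv /=.
  - move=> [[h1 h2] hx].
    rewrite QF1 // in h1.
    rewrite QF2 // in h2; last exact: hs_I.
    move: h2 hx; rewrite /m0 /m1 /m2 /m3 !le_min /hs.
    case: (ltP x (1/4)) => a1; first by move=> h2 hx; left; lra.
    case: (ltP x (1/2)) => a2; first by move=> h2 hx; right; left; lra.
    case: (ltP x (3/4)) => a3; first by move=> h2 hx; right; right; left; lra.
    by move=> h2 hx; right; right; right; lra.
  - move=> H.
    have hx : 0 <= x <= 1 by move: H; lra.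
    rewrite QF1 // QF2 //; last exact: hs_I.
    move: H hx; rewrite /m0 /m1 /m2 /m3 !le_min /hs; crush.
have mI : forall (a b c : R), measurable (`[a, b[ `&` `]-oo, c] : set R).
  by move=> a b c; apply: measurableI.
have mJ : forall (a b c : R), measurable (`[a, b] `&` `]-oo, c] : set R).
  by move=> a b c; apply: measurableI.
have mA0 := mI 0 (1/4) m0.
have mA1 := mI (1/4) (1/2) m1.
have mA2 := mI (1/2) (3/4) m2.
have mA3 := mJ (3/4) 1 m3.
rewrite measureU //; last 2 first.
- by apply: measurableU => //; apply: measurableU.
- apply/seteqP; split => x //=; rewrite !in_itv /=; move=> [h H]; move: h H; lra.
rewrite measureU //; last 2 first.
- by apply: measurableU.
- apply/seteqP; split => x //=; rewrite !in_itv /=; move=> [h H]; move: h H; lra.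
rewrite measureU //; last first.
- apply/seteqP; split => x //=; rewrite !in_itv /=; move=> [h H]; move: h H; lra.
rewrite /= !meas_co ?meas_cc.
all: try (match goal with |- is_true (_ <= _) => lra end).
rewrite !if_phi.
all: try (match goal with |- (_ - _ = 1/4) => lra end).
rewrite -!EFinD; congr (_%:E); rewrite /sh /tm /m0 /m1 /m2 /m3 subr0; lra.
Qed.
End C2.



Section D1.
Variable R : realType.
Local Notation mu := (@lebesgue_measure R).

Definition stp (c1 c2 c3 c4 t : R) :=
  if t < 1/4 then c1 else if t < 1/2 then c2 else if t < 3/4 then c3 else c4.

Lemma indic_co (a b t : R) :
  \1_(`[a, b[) t = (if a <= t then if t < b then 1 else 0 else 0) :> R.
Proof.
rewrite indicE mem_setE in_itv /=.
by case: (leP a t) => //=; case: (ltP t b).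
Qed.

Lemma int_ci (c a b v : R) : 0 <= c -> a <= b -> 0 <= a -> 0 <= v ->
  (\int[mu]_(t in `[0%R, v]) (c * \1_(`[a, b[) t)%:E =
   (c * (if v < a then 0 else if v < b then v - a else b - a))%:E)%E.
Proof.
move=> c0 ab a0 v0.
rewrite (@integralZl_indic _ _ _ mu `[0%R, v] (measurable_itv _) (fun=> `[a, b[%classic) c) //; last first.
  by move=> /lt_le_trans /(_ c0); rewrite ltxx.
rewrite integral_indic //.
rewrite (_ : `[a, b[ `&` `[0, v] = `[a, b[ `&` `]-oo, v]).
  by rewrite EFinM; congr (_ * _)%E; exact: meas_co.
apply/seteqP; split => x /=; rewrite !in_itv /=.
  by move=> [h /andP[_ ->]].
move=> [/andP[h1 h2] h3]; split; first by apply/andP.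
by apply/andP; split => //; lra.
Qed.

Lemma int_stp (c1 c2 c3 c4 v : R) : 0 <= c1 -> 0 <= c2 -> 0 <= c3 -> 0 <= c4 ->
  0 <= v <= 1 ->
  (\int[mu]_(t in `[0%R, v]) (stp c1 c2 c3 c4 t)%:E =
   (phi v * c1 + phi (v - 1/4) * c2 + phi (v - 1/2) * c3 + phi (v - 3/4) * c4)%:E)%E.
Proof.
move=> h1 h2 h3 h4 /andP[v0 v1].
rewrite (eq_integral (fun t : measurableTypeR R => ((c1 * \1_(`[0, 1/4[) t)%R)%:E +
   (((c2 * \1_(`[1/4, 1/2[) t)%R)%:E + (((c3 * \1_(`[1/2, 3/4[) t)%R)%:E +
    ((c4 * \1_(`[3/4, 2[) t)%R)%:E)))%E); last first.
  move=> t; rewrite mem_setE in_itv /= => /andP[t0 t1].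
  rewrite -!EFinD; congr (_%:E).
  rewrite !indic_co /stp; crush.
have mi : forall (c a b : R), measurable_fun (`[0, v] : set (measurableTypeR R)) (fun t : measurableTypeR R => (c * \1_(`[a, b[) t)%:E).
  by move=> c a b; apply/measurable_EFinP; apply: measurable_funM.
have pi : forall (c a b : R), 0 <= c -> forall t : measurableTypeR R, (`[0, v]%classic : set _) t -> (0 <= (c * \1_(`[a, b[) t)%:E)%E.
  by move=> c a b c0 t _; rewrite lee_fin mulr_ge0.
rewrite ge0_integralD //.
all: try (by move=> t ht; repeat apply: adde_ge0; apply: pi).
all: try (by repeat apply: emeasurable_funD; exact: mi).
rewrite ge0_integralD //.
all: try (by move=> t ht; repeat apply: adde_ge0; apply: pi).
all: try (by repeat apply: emeasurable_funD; exact: mi).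
rewrite ge0_integralD //.
all: try (by move=> t ht; repeat apply: adde_ge0; apply: pi).
all: try (by repeat apply: emeasurable_funD; exact: mi).
rewrite !int_ci //.
all: try (match goal with |- is_true (_ <= _) => lra end).
rewrite -!EFinD; congr (_%:E).
have -> : (if v < 3/4 then 0 else if v < 2 then v - 3/4 else 2 - 3/4) = phi (v - 3/4).
  rewrite /phi; crush.
rewrite !if_phi; try lra.
rewrite subr0; lra.
Qed.
End D1.



Section D2.
Variable R : realType.
Local Notation mu := (@lebesgue_measure R).

Definition f1 (x : R) : (R * R)%type := (Qcv x, id (hs (1/4) (3/4) (1/2) 0 x)).
Definition f2 (x : R) : (R * R)%type := (id x, Qcc (hs (1/2) (1/4) (3/4) 0 x)).
Definition f3 (x : R) : (R * R)%type := (id x, Qcv (hs (3/4) 0 (1/2) (1/4) x)).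
Definition f4 (x : R) : (R * R)%type := (Qcc x, id (hs (3/4) (1/4) 0 (1/2) x)).

Lemma id_cont : continuous (fun u : R => u).
Proof. by move=> x; exact: cvg_id. Qed.

Lemma mid : measurable_fun [set: R] (@id R).
Proof. exact: measurable_id. Qed.

Lemma mf1 : measurable_fun [set: R] f1.
Proof.
rewrite /f1.
apply: measurable_fun_pair; first exact: (continuous_measurable_fun (@Qcv_cont R)).
exact: hs_meas.
Qed.
Lemma mf2 : measurable_fun [set: R] f2.
Proof.
rewrite /f2.
apply: measurable_fun_pair; first exact: measurable_id.
apply: measurableT_comp; first exact: (continuous_measurable_fun (@Qcc_cont R)).
exact: hs_meas.
Qed.
Lemma mf3 : measurable_fun [set: R] f3.
Proof.
rewrite /f3.
apply: measurable_fun_pair; first exact: measurable_id.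
apply: measurableT_comp; first exact: (continuous_measurable_fun (@Qcv_cont R)).
exact: hs_meas.
Qed.
Lemma mf4 : measurable_fun [set: R] f4.
Proof.
rewrite /f4.
apply: measurable_fun_pair; first exact: (continuous_measurable_fun (@Qcc_cont R)).
exact: hs_meas.
Qed.

Definition f1T : measurableTypeR R -> (R * R)%type := f1.
Definition f2T : measurableTypeR R -> (R * R)%type := f2.
Definition f3T : measurableTypeR R -> (R * R)%type := f3.
Definition f4T : measurableTypeR R -> (R * R)%type := f4.
Lemma mf1T : measurable_fun [set: measurableTypeR R] f1T. Proof. exact: mf1. Qed.
Lemma mf2T : measurable_fun [set: measurableTypeR R] f2T. Proof. exact: mf2. Qed.
Lemma mf3T : measurable_fun [set: measurableTypeR R] f3T. Proof. exact: mf3. Qed.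
Lemma mf4T : measurable_fun [set: measurableTypeR R] f4T. Proof. exact: mf4. Qed.
HB.instance Definition _ := isMeasurableFun.Build _ _ (measurableTypeR R) (R * R)%type f1T mf1T.
HB.instance Definition _ := isMeasurableFun.Build _ _ (measurableTypeR R) (R * R)%type f2T mf2T.
HB.instance Definition _ := isMeasurableFun.Build _ _ (measurableTypeR R) (R * R)%type f3T mf3T.
HB.instance Definition _ := isMeasurableFun.Build _ _ (measurableTypeR R) (R * R)%type f4T mf4T.
Definition K1 : probability (R * R)%type R := distribution (P1 R) f1T.
Definition K2 : probability (R * R)%type R := distribution (P1 R) f2T.
Definition K3 : probability (R * R)%type R := distribution (P1 R) f3T.
Definition K4 : probability (R * R)%type R := distribution (P1 R) f4T.

Lemma QFb_cv (x u : R) : 0 <= x <= 1 -> 0 <= u <= 1 -> (0 <= Qcv x <= u) = (x <= Fcv u).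
Proof.
move=> hx hu; apply/idP/idP => [/andP h | h]; first exact/(QFcv hx hu).1.
by apply/andP; exact/(QFcv hx hu).2.
Qed.
Lemma QFb_cc (x u : R) : 0 <= x <= 1 -> 0 <= u <= 1 -> (0 <= Qcc x <= u) = (x <= Fcc u).
Proof.
move=> hx hu; apply/idP/idP => [/andP h | h]; first exact/(QFcc hx hu).1.
by apply/andP; exact/(QFcc hx hu).2.
Qed.
Lemma QFb_id (x u : R) : 0 <= x <= 1 -> 0 <= u <= 1 -> (0 <= id x <= u) = (x <= id u).
Proof. by case/andP => /= ->. Qed.

Lemma q0b : 0 <= (0 : R) <= 3/4. Proof. by apply/andP; split; lra. Qed.
Lemma q14b : 0 <= (1/4 : R) <= 3/4. Proof. by apply/andP; split; lra. Qed.
Lemma q12b : 0 <= (1/2 : R) <= 3/4. Proof. by apply/andP; split; lra. Qed.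
Lemma q34b : 0 <= (3/4 : R) <= 3/4. Proof. by apply/andP; split; lra. Qed.

Lemma K1E (u1 u2 : R) : 0 <= u1 <= 1 -> 0 <= u2 <= 1 ->
  K1 (`[0, u1] `*` `[0, u2]) = (sh1 (Fcv u1) u2)%:E.
Proof.
move=> hu1 hu2; rewrite /K1 /distribution /pushforward.
exact: (@rectE R (@Qcv R) (@id R) (@Fcv R) (@id R) (1/4) (3/4) (1/2) 0 mf1 QFb_cv QFb_id
  q14b q34b q12b q0b u1 u2 hu1 hu2).
Qed.
Lemma K2E (u1 u2 : R) : 0 <= u1 <= 1 -> 0 <= u2 <= 1 ->
  K2 (`[0, u1] `*` `[0, u2]) = (sh2 u1 (Fcc u2))%:E.
Proof.
move=> hu1 hu2; rewrite /K2 /distribution /pushforward.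
exact: (@rectE R (@id R) (@Qcc R) (@id R) (@Fcc R) (1/2) (1/4) (3/4) 0 mf2 QFb_id QFb_cc
  q12b q14b q34b q0b u1 u2 hu1 hu2).
Qed.
Lemma K3E (u1 u2 : R) : 0 <= u1 <= 1 -> 0 <= u2 <= 1 ->
  K3 (`[0, u1] `*` `[0, u2]) = (sh3 u1 (Fcv u2))%:E.
Proof.
move=> hu1 hu2; rewrite /K3 /distribution /pushforward.
exact: (@rectE R (@id R) (@Qcv R) (@id R) (@Fcv R) (3/4) 0 (1/2) (1/4) mf3 QFb_id QFb_cv
  q34b q0b q12b q14b u1 u2 hu1 hu2).
Qed.
Lemma K4E (u1 u2 : R) : 0 <= u1 <= 1 -> 0 <= u2 <= 1 ->
  K4 (`[0, u1] `*` `[0, u2]) = (sh4 (Fcc u1) u2)%:E.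
Proof.
move=> hu1 hu2; rewrite /K4 /distribution /pushforward.
exact: (@rectE R (@Qcc R) (@id R) (@Fcc R) (@id R) (3/4) (1/4) 0 (1/2) mf4 QFb_cc QFb_id
  q34b q14b q0b q12b u1 u2 hu1 hu2).
Qed.
End D2.



Section D3.
Variable R : realType.
Local Notation mu := (@lebesgue_measure R).

Definition Kf (t : R) : probability (R * R)%type R :=
  if t < 1/4 then K1 R else if t < 1/2 then K2 R else if t < 3/4 then K3 R else K4 R.

Definition G1 (u1 u2 : R) := sh1 (Fcv u1) u2.
Definition G2 (u1 u2 : R) := sh2 u1 (Fcc u2).
Definition G3 (u1 u2 : R) := sh3 u1 (Fcv u2).
Definition G4 (u1 u2 : R) := sh4 (Fcc u1) u2.

Lemma KfE (t u1 u2 : R) : 0 <= u1 <= 1 -> 0 <= u2 <= 1 ->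
  Kf t (`[0, u1] `*` `[0, u2]) = (stp (G1 u1 u2) (G2 u1 u2) (G3 u1 u2) (G4 u1 u2) t)%:E.
Proof.
move=> hu1 hu2; rewrite /Kf /stp.
case: ifP => _; first exact: K1E.
case: ifP => _; first exact: K2E.
case: ifP => _; [exact: K3E | exact: K4E].
Qed.

Lemma cop_b (C : R -> R -> R) : cop2 C -> forall u, 0 <= u <= 1 ->
  [/\ C 0 u = 0, C u 0 = 0, C u 1 = u & C 1 u = u].
Proof. by case. Qed.

Lemma G_u1 (u : R) : 0 <= u <= 1 ->
  [/\ G1 u 1 = Fcv u, G2 u 1 = u, G3 u 1 = u & G4 u 1 = Fcc u].
Proof.
move=> hu; rewrite /G1 /G2 /G3 /G4 Fcc1 Fcv1.
have [_ _ a _] := cop_b (sh1_cop R) (Fcv_I hu).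
have [_ _ b _] := cop_b (sh2_cop R) hu.
have [_ _ c _] := cop_b (sh3_cop R) hu.
have [_ _ d _] := cop_b (sh4_cop R) (Fcc_I hu).
by split.
Qed.

Lemma G_1u (u : R) : 0 <= u <= 1 ->
  [/\ G1 1 u = u, G2 1 u = Fcc u, G3 1 u = Fcv u & G4 1 u = u].
Proof.
move=> hu; rewrite /G1 /G2 /G3 /G4 Fcc1 Fcv1.
have [_ _ _ a] := cop_b (sh1_cop R) hu.
have [_ _ _ b] := cop_b (sh2_cop R) (Fcc_I hu).
have [_ _ _ c] := cop_b (sh3_cop R) (Fcv_I hu).
have [_ _ _ d] := cop_b (sh4_cop R) hu.
by split.
Qed.

Lemma G_0u (u : R) : 0 <= u <= 1 ->
  [/\ G1 0 u = 0, G2 0 u = 0, G3 0 u = 0 & G4 0 u = 0].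
Proof.
move=> hu; rewrite /G1 /G2 /G3 /G4 Fcc0 Fcv0.
have [a _ _ _] := cop_b (sh1_cop R) hu.
have [b _ _ _] := cop_b (sh2_cop R) (Fcc_I hu).
have [c _ _ _] := cop_b (sh3_cop R) (Fcv_I hu).
have [d _ _ _] := cop_b (sh4_cop R) hu.
by split.
Qed.

Lemma G_u0 (u : R) : 0 <= u <= 1 ->
  [/\ G1 u 0 = 0, G2 u 0 = 0, G3 u 0 = 0 & G4 u 0 = 0].
Proof.
move=> hu; rewrite /G1 /G2 /G3 /G4 Fcc0 Fcv0.
have [_ a _ _] := cop_b (sh1_cop R) (Fcv_I hu).
have [_ b _ _] := cop_b (sh2_cop R) hu.
have [_ c _ _] := cop_b (sh3_cop R) hu.
have [_ d _ _] := cop_b (sh4_cop R) (Fcc_I hu).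
by split.
Qed.

Lemma I1 : 0 <= (1 : R) <= 1. Proof. by apply/andP; split; lra. Qed.

Lemma F13E (t u : R) : 0 <= u <= 1 -> F13 Kf t u = stp (Fcv u) u u (Fcc u) t.
Proof.
move=> hu; rewrite /F13 KfE //; last exact: I1.
by have [-> -> -> ->] := G_u1 hu.
Qed.

Lemma F23E (t u : R) : 0 <= u <= 1 -> F23 Kf t u = stp u (Fcc u) (Fcv u) u t.
Proof.
move=> hu; rewrite /F23 KfE //; last exact: I1.
by have [-> -> -> ->] := G_1u hu.
Qed.

Definition Cop (u1 u2 v : R) := phi v * G1 u1 u2 + phi (v - 1/4) * G2 u1 u2 +
  phi (v - 1/2) * G3 u1 u2 + phi (v - 3/4) * G4 u1 u2.

Definition Ctf (t : R) : R -> R -> R :=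
  if t < 1/4 then sh1 (R:=R) else if t < 1/2 then sh2 (R:=R) else if t < 3/4 then sh3 (R:=R) else sh4 (R:=R).

Lemma CtfE (t s1 s2 : R) : Ctf t s1 s2 = stp (sh1 s1 s2) (sh2 s1 s2) (sh3 s1 s2) (sh4 s1 s2) t.
Proof. by rewrite /Ctf /stp; case: ifP => //; case: ifP => //; case: ifP. Qed.

Lemma mstp (c1 c2 c3 c4 : R) : measurable_fun [set: R] (stp c1 c2 c3 c4).
Proof.
rewrite /stp.
have mlt : forall c : R, measurable_fun setT (fun x : R => x < c).
  by move=> c; apply: measurable_fun_ltr.
apply: measurable_fun_ifT => //.
apply: measurable_fun_ifT => //.
exact: measurable_fun_ifT.
Qed.

Lemma cond_kernel_ok : cond_kernel Cop Kf.
Proof.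
split.
  move=> A mA.
  rewrite (_ : Kf^~ A = fun t => if t < 1/4 then K1 R A else if t < 1/2 then K2 R A
     else if t < 3/4 then K3 R A else K4 R A); last first.
    by apply: funext => t; rewrite /Kf; case: ifP => //; case: ifP => //; case: ifP.
  have mlt : forall c : R, measurable_fun setT (fun x : R => x < c).
    by move=> c; apply: measurable_fun_ltr.
  apply: measurable_fun_ifT => //.
  apply: measurable_fun_ifT => //.
  exact: measurable_fun_ifT.
move=> u1 u2 v hu1 hu2 hv.
rewrite (eq_integral (fun t : measurableTypeR R =>
   (stp (G1 u1 u2) (G2 u1 u2) (G3 u1 u2) (G4 u1 u2) t)%:E)); last first.
  by move=> t _; rewrite KfE.
rewrite /Cop; apply/esym; apply: int_stp => //; exact: sh_ge0.
Qed.

End D3.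



Section D4.
Variable R : realType.
Local Notation mu := (@lebesgue_measure R).

Lemma cont_ok : cont_cond_dfs (Kf (R:=R)).
Proof.
apply: aeW => t _; split.
  apply: (@subspace_eq_continuous _ _ _ (fun u => stp (Fcv u) u u (Fcc u) t)).
    by move=> u; rewrite mem_setE in_itv /= => hu; rewrite /from_subspace F13E.
  apply: continuous_subspaceT; rewrite /stp.
  case: (ltP t (1/4)) => _; first exact: Fcv_cont.
  case: (ltP t (1/2)) => _; first exact: id_cont.
  case: (ltP t (3/4)) => _; [exact: id_cont | exact: Fcc_cont].
apply: (@subspace_eq_continuous _ _ _ (fun u => stp u (Fcc u) (Fcv u) u t)).
  by move=> u; rewrite mem_setE in_itv /= => hu; rewrite /from_subspace F23E.
apply: continuous_subspaceT; rewrite /stp.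
case: (ltP t (1/4)) => _; first exact: id_cont.
case: (ltP t (1/2)) => _; first exact: Fcc_cont.
case: (ltP t (3/4)) => _; [exact: Fcv_cont | exact: id_cont].
Qed.

Lemma cond_copulas_ok : cond_copulas (Kf (R:=R)) (Ctf (R:=R)).
Proof.
split.
  move=> s1 s2; apply: measurable_funTS.
  rewrite (_ : (fun t => Ctf t s1 s2) = stp (sh1 s1 s2) (sh2 s1 s2) (sh3 s1 s2) (sh4 s1 s2)).
    exact: mstp.
  by apply: funext => t; rewrite CtfE.
apply: aeW => t _; split.
  rewrite /Ctf; case: ifP => _; first exact: sh1_cop.
  case: ifP => _; first exact: sh2_cop.
  case: ifP => _; [exact: sh3_cop | exact: sh4_cop].
move=> u1 u2 hu1 hu2.
rewrite KfE // F13E // F23E // CtfE /stp.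
by case: ifP => _ //; case: ifP => _ //; case: ifP => _.
Qed.

Lemma phi_v (v : R) : 0 <= phi v <= 1/4.
Proof. by rewrite phi_ge0 phi_le. Qed.

Lemma copula3_ok : copula3 (Cop (R:=R)).
Proof.
split.
- move=> x y hx hy; split.
  + by rewrite /Cop; have [-> -> -> ->] := G_0u hx; rewrite !mulr0 !addr0.
  + by rewrite /Cop; have [-> -> -> ->] := G_u0 hx; rewrite !mulr0 !addr0.
  + by rewrite /Cop !phi0; try lra.
- move=> x hx; have hphi : forall z : R, 1/4 <= z -> phi z = 1/4.
    by move=> z hz; rewrite /phi; crush.
  split.
  + rewrite /Cop; have [-> -> -> ->] := G_u1 hx.
    rewrite !hphi; try lra.
    have := Fsum x; lra.
  + rewrite /Cop; have [-> -> -> ->] := G_1u hx.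
    rewrite !hphi; try lra.
    have := Fsum x; lra.
  + rewrite /Cop; have [-> -> -> ->] := G_1u (@I1 R).
    rewrite Fcv1 Fcc1 !mulr1.
    exact: sum_phi.
- move=> a1 b1 a2 b2 a3 b3 ha1 hb1 ha2 hb2 ha3 hb3 h1 h2 h3.
  set D1 := G1 b1 b2 - G1 a1 b2 - G1 b1 a2 + G1 a1 a2.
  set D2 := G2 b1 b2 - G2 a1 b2 - G2 b1 a2 + G2 a1 a2.
  set D3 := G3 b1 b2 - G3 a1 b2 - G3 b1 a2 + G3 a1 a2.
  set D4 := G4 b1 b2 - G4 a1 b2 - G4 b1 a2 + G4 a1 a2.
  have hD1 : 0 <= D1 by apply: sh_incr => //; exact: Fcv_mono.
  have hD2 : 0 <= D2 by apply: sh_incr => //; exact: Fcc_mono.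
  have hD3 : 0 <= D3 by apply: sh_incr => //; exact: Fcv_mono.
  have hD4 : 0 <= D4 by apply: sh_incr => //; exact: Fcc_mono.
  have w : forall c : R, 0 <= phi (b3 - c) - phi (a3 - c).
    by move=> c; rewrite subr_ge0; apply: phi_mono; lra.
  have -> : Cop b1 b2 b3 - Cop a1 b2 b3 - Cop b1 a2 b3 - Cop b1 b2 a3 + Cop a1 a2 b3 +
    Cop a1 b2 a3 + Cop b1 a2 a3 - Cop a1 a2 a3 =
    (phi (b3 - 0) - phi (a3 - 0)) * D1 + (phi (b3 - 1/4) - phi (a3 - 1/4)) * D2 +
    (phi (b3 - 1/2) - phi (a3 - 1/2)) * D3 + (phi (b3 - 3/4) - phi (a3 - 3/4)) * D4.
    by rewrite /Cop /D1 /D2 /D3 /D4 !subr0; ring.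
  by rewrite !addr_ge0 // mulr_ge0.
Qed.

End D4.



Section D5.
Variable R : realType.
Local Notation mu := (@lebesgue_measure R).

Definition Cpf (s1 s2 : R) := phi 1 * sh1 s1 s2 + phi (1 - 1/4) * sh2 s1 s2 +
  phi (1 - 1/2) * sh3 s1 s2 + phi (1 - 3/4) * sh4 s1 s2.

Lemma Cpf_ge0 (s1 s2 : R) : 0 <= Cpf s1 s2.
Proof.
rewrite /Cpf; repeat apply: addr_ge0; apply: mulr_ge0; [exact: phi_ge0 | exact: sh_ge0|
  exact: phi_ge0 | exact: sh_ge0 | exact: phi_ge0 | exact: sh_ge0 | exact: phi_ge0 | exact: sh_ge0].
Qed.

Lemma pcE (s1 s2 : R) : partial_copula (Ctf (R:=R)) s1 s2 = Cpf s1 s2.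
Proof.
rewrite /partial_copula (eq_integral (fun t : measurableTypeR R =>
   (stp (sh1 s1 s2) (sh2 s1 s2) (sh3 s1 s2) (sh4 s1 s2) t)%:E)); last first.
  by move=> t _; rewrite CtfE.
transitivity (fine ((Cpf s1 s2)%:E)); last by [].
congr fine; apply: int_stp; try exact: sh_ge0.
exact: I1.
Qed.

Lemma pvcE (u1 u2 v : R) : 0 <= u1 <= 1 -> 0 <= u2 <= 1 -> 0 <= v <= 1 ->
  pvc (Kf (R:=R)) (Ctf (R:=R)) u1 u2 v =
  phi v * Cpf (Fcv u1) u2 + phi (v - 1/4) * Cpf u1 (Fcc u2) +
  phi (v - 1/2) * Cpf u1 (Fcv u2) + phi (v - 3/4) * Cpf (Fcc u1) u2.
Proof.
move=> hu1 hu2 hv.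
rewrite /pvc (eq_integral (fun t : measurableTypeR R =>
   (stp (Cpf (Fcv u1) u2) (Cpf u1 (Fcc u2)) (Cpf u1 (Fcv u2)) (Cpf (Fcc u1) u2) t)%:E)); last first.
  move=> t _; rewrite F13E // F23E // /stp.
  by case: ifP => _; [rewrite pcE | case: ifP => _; [rewrite pcE | case: ifP => _; rewrite pcE]].
transitivity (fine ((phi v * Cpf (Fcv u1) u2 + phi (v - 1/4) * Cpf u1 (Fcc u2) +
  phi (v - 1/2) * Cpf u1 (Fcv u2) + phi (v - 3/4) * Cpf (Fcc u1) u2)%:E)); last by [].
by congr fine; apply: int_stp => //; exact: Cpf_ge0.
Qed.

Lemma sh_le1 (q0 q1 q2 q3 s1 s2 : R) : sh q0 q1 q2 q3 s1 s2 <= 1.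
Proof.
rewrite /sh /tm.
move: (phi_le (Num.min s1 (s2 + (0 - q0)) - 0)) (phi_le (Num.min s1 (s2 + (1/4 - q1)) - 1/4))
  (phi_le (Num.min s1 (s2 + (1/2 - q2)) - 1/2)) (phi_le (Num.min s1 (s2 + (3/4 - q3)) - 3/4)).
lra.
Qed.

Lemma prod_b (a b : R) : 0 <= a <= 1/4 -> 0 <= b <= 1 -> 0 <= a * b <= 1/4.
Proof.
move=> /andP[a0 a1] /andP[b0 b1]; apply/andP; split; first exact: mulr_ge0.
apply: le_trans a1; rewrite -[leRHS]mulr1; exact: ler_wpM2l.
Qed.

Lemma phi_b (z : R) : 0 <= phi z <= 1/4.
Proof. by rewrite phi_ge0 phi_le. Qed.

Lemma sh_b (q0 q1 q2 q3 s1 s2 : R) : 0 <= sh q0 q1 q2 q3 s1 s2 <= 1.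
Proof. by rewrite sh_ge0 sh_le1. Qed.

Lemma Cpf_b (s1 s2 : R) : 0 <= Cpf s1 s2 <= 1.
Proof.
rewrite /Cpf.
move: (prod_b (phi_b 1) (sh_b (1/4) (3/4) (1/2) 0 s1 s2))
  (prod_b (phi_b (1 - 1/4)) (sh_b (1/2) (1/4) (3/4) 0 s1 s2))
  (prod_b (phi_b (1 - 1/2)) (sh_b (3/4) 0 (1/2) (1/4) s1 s2))
  (prod_b (phi_b (1 - 3/4)) (sh_b (3/4) (1/4) 0 (1/2) s1 s2)).
rewrite /sh1 /sh2 /sh3 /sh4.
move=> /andP[? ?] /andP[? ?] /andP[? ?] /andP[? ?].
apply/andP; split; lra.
Qed.

Lemma hphi (z : R) : 1/4 <= z -> phi z = 1/4.
Proof. by move=> hz; rewrite /phi; crush. Qed.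

Lemma dinf_ok : 3 / 16 <= dinf (Cop (R:=R)) (pvc (Kf (R:=R)) (Ctf (R:=R))).
Proof.
rewrite /dinf.
set S := [set r | _].
have Sub : ubound S 2.
  move=> r [u1 [u2 [v [hu1 hu2 hv ->]]]].
  rewrite pvcE //.
  move: (prod_b (phi_b v) (Cpf_b (Fcv u1) u2)) (prod_b (phi_b (v - 1/4)) (Cpf_b u1 (Fcc u2)))
    (prod_b (phi_b (v - 1/2)) (Cpf_b u1 (Fcv u2))) (prod_b (phi_b (v - 3/4)) (Cpf_b (Fcc u1) u2)).
  move: (prod_b (phi_b v) (sh_b (1/4) (3/4) (1/2) 0 (Fcv u1) u2))
    (prod_b (phi_b (v - 1/4)) (sh_b (1/2) (1/4) (3/4) 0 u1 (Fcc u2)))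
    (prod_b (phi_b (v - 1/2)) (sh_b (3/4) 0 (1/2) (1/4) u1 (Fcv u2)))
    (prod_b (phi_b (v - 3/4)) (sh_b (3/4) (1/4) 0 (1/2) (Fcc u1) u2)).
  rewrite /Cop /G1 /G2 /G3 /G4 /sh1 /sh2 /sh3 /sh4.
  move=> /andP[? ?] /andP[? ?] /andP[? ?] /andP[? ?] /andP[? ?] /andP[? ?] /andP[? ?] /andP[? ?].
  set x := (X in `|X|).
  have [h|h] := lerP 0 x.
    by rewrite ger0_norm //; rewrite /x; lra.
  by rewrite ltr0_norm //; rewrite /x; lra.
have mem : S (3/16).
  have hh : 0 <= (1/2 : R) <= 1 by apply/andP; split; lra.
  exists (1/2), (1/2), 1; split => //; first exact: I1.
  rewrite pvcE //; last exact: I1.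
  rewrite /Cop /G1 /G2 /G3 /G4 /Cpf Fcvh Fcch.
  rewrite !hphi; try lra.
  rewrite e11 e12 e13 e14 e21 e22 e23 e24 e31 e32 e33 e34 e41 e42 e43 e44.
  rewrite ger0_norm; lra.
have hub : has_ubound S by exists 2.
exact: (ub_le_sup hub mem).
Qed.

Lemma main : exists (C : R -> R -> R -> R) (K : R -> probability (R * R)%type R)
         (Ct : R -> R -> R -> R),
    [/\ copula3 C, cond_kernel C K, cont_cond_dfs K, cond_copulas K Ct &
        3 / 16 <= dinf C (pvc K Ct)].
Proof.
exists (Cop (R:=R)), (Kf (R:=R)), (Ctf (R:=R)); split.
- exact: copula3_ok.
- exact: cond_kernel_ok.
- exact: cont_ok.
- exact: cond_copulas_ok.
- exact: dinf_ok.
Qed.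
End D5.

End Dev.

Unset Implicit Arguments.
Theorem theorem5p6 (R : realType) :
  exists (C : R -> R -> R -> R) (K : R -> probability (R * R)%type R)
         (Ct : R -> R -> R -> R),
    [/\ copula3 C, cond_kernel C K, cont_cond_dfs K, cond_copulas K Ct &
        3 / 16 <= dinf C (pvc K Ct)].
Proof. exact: (@Dev.main R). Qed.
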